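(* Let $\lambda,\mu\in P^+$ be such that $\langle\alpha_i^\vee,\mu\rangle=0$ whenever $\langle\alpha_i^\vee,\lambda\rangle=0$. If $x\otimes y\in\mathcal{F}(\{b_\lambda\otimes b_\mu\})\subseteq\mathcal{B}(\lambda)\otimes\mathcal{B}(\mu)$ and $x\in\mathcal{B}_w(\lambda)$ for some $w\in W$, then $y\in\mathcal{B}_w(\mu)$.
   Context: $\mathfrak g$ is a complex semisimple Lie algebra with Dynkin index set $I$, simple coroots $\alpha_i^\vee$, dominant weights $P^+$, Weyl group $W$ generated by simple reflections $s_i$. For $\lambda\in P^+$, $\mathcal{B}(\lambda)$ is Kashiwara's crystal of the irreducible module of highest weight $\lambda$ with operators $e_i,f_i$, $\varepsilon_i(b)=\max\{k:e_i^k(b)\ne0\}$, $\varphi_i(b)=\max\{k:f_i^k(b)\ne0\}$, and highest weight element $b_\lambda$. For $w$ with any reduced expression $s_{i_1}\cdots s_{i_\ell}$, $\mathcal{B}_w(\lambda)=\{f_{i_1}^{m_1}\cdots f_{i_\ell}^{m_\ell}(b_\lambda):m_j\ge0\}\setminus\{0\}$. Tensor product rule: $e_i(b_1\otimes b_2)=e_i(b_1)\otimes b_2$ if $\varepsilon_i(b_2)\le\varphi_i(b_1)$, else $b_1\otimes e_i(b_2)$; $f_i(b_1\otimes b_2)=f_i(b_1)\otimes b_2$ if $\varepsilon_i(b_2)<\varphi_i(b_1)$, else $b_1\otimes f_i(b_2)$. $\mathcal{F}(\{b\})$ denotes the set of all nonzero elements obtained from $b$ by applying finite sequences of the operators $f_i$,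 $i\in I$ (including $b$ itself). *)

(* Defs.v *)
From mathcomp Require Import all_boot all_order all_algebra.
Set Implicit Arguments. Unset Strict Implicit. Unset Printing Implicit Defensive.
Import Order.TTheory GRing.Theory Num.Theory.
Local Open Scope ring_scope.

(** The semisimple Lie algebra g is encoded by its Cartan
    matrix A : 'M[int]_n (index set I = 'I_n), with A i j = <alpha_i^v, alpha_j>.
    Weights are written in the basis of fundamental weights, so a weight is a
    function 'I_n -> int with  <alpha_i^v, v> = v i;  dominant weights P^+ are
    the functions 'I_n -> nat. *)

(** Cartan matrix of finite type (= Cartan matrix of a complex semisimple Lie
    algebra): generalized Cartan matrix which is symmetrizable with positive
    definite symmetrization. *)
Definition cartan_finite (n : nat) (A : 'M[int]_n) : Prop :=
  [/\ (forall i, A i i = 2),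
      (forall i j, i != j -> A i j <= 0),
      (forall i j, A i j = 0 <-> A j i = 0) &
      exists d : 'I_n -> rat,
        [/\ (forall i, 0 < d i),
            (forall i j, d i * (A i j)%:~R = d j * (A j i)%:~R) &
            (forall v : 'I_n -> rat, (exists i, v i != 0) ->
               0 < \sum_i \sum_j v i * d i * (A i j)%:~R * v j)]].

Definition weight (n : nat) := 'I_n -> int.

Definition alpha (n : nat) (A : 'M[int]_n) (j : 'I_n) : weight n := fun i => A i j.

(** Weyl group: simple reflection s_i v = v - <alpha_i^v, v> alpha_i,
    words act by s_{i1} ( ... (s_{il} v)). *)
Definition sref (n : nat) (A : 'M[int]_n) (i : 'I_n) (v : weight n) : weight n :=
  fun j => v j - v i * A j i.

Definition wact (n : nat) (A : 'M[int]_n) (w : seq 'I_n) (v : weight n) : weight n :=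
  foldr (fun i u => sref A i u) v w.

Definition reduced (n : nat) (A : 'M[int]_n) (w : seq 'I_n) : Prop :=
  forall w' : seq 'I_n, (forall v j, wact A w' v j = wact A w v j) ->
    (size w <= size w')%N.

(** Crystal data: carrier, weight, Kashiwara operators (None = 0),
    epsilon and phi. *)
Record crystal_data (n : nat) := CrystalData {
  cB : Type;
  cwt : cB -> weight n;
  ce : 'I_n -> cB -> option cB;
  cf : 'I_n -> cB -> option cB;
  ceps : 'I_n -> cB -> nat;
  cphi : 'I_n -> cB -> nat }.
Arguments cB {n} c.
Arguments cwt {n} c _ _.
Arguments ce {n} c _ _.
Arguments cf {n} c _ _.
Arguments ceps {n} c _ _.
Arguments cphi {n} c _ _.

Definition oiter (T : Type) (g : T -> option T) (k : nat) (b : T) : option T :=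
  iter k (fun o => obind g o) (Some b).

(** Seminormal crystal: Kashiwara's crystal axioms with
    eps_i b = max{k | e_i^k b <> 0}, phi_i b = max{k | f_i^k b <> 0}. *)
Definition seminormal (n : nat) (A : 'M[int]_n) (C : crystal_data n) : Prop :=
  [/\ (forall i b b', ce C i b = Some b' <-> cf C i b' = Some b),
      (forall i b b', ce C i b = Some b' ->
          forall j, cwt C b' j = cwt C b j + alpha A i j),
      (forall i b, oiter (ce C i) (ceps C i b) b <> None /\
                   oiter (ce C i) (ceps C i b).+1 b = None),
      (forall i b, oiter (cf C i) (cphi C i b) b <> None /\
                   oiter (cf C i) (cphi C i b).+1 b = None) &
      (forall i b, (cphi C i b)%:Z - (ceps C i b)%:Z = cwt C b i)].

Definition tensor_e (n : nat) (C D : crystal_data n) (i : 'I_n)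
    (p : cB C * cB D) : option (cB C * cB D) :=
  if (ceps D i p.2 <= cphi C i p.1)%N
  then omap (fun c => (c, p.2)) (ce C i p.1)
  else omap (fun d => (p.1, d)) (ce D i p.2).

Definition tensor_f (n : nat) (C D : crystal_data n) (i : 'I_n)
    (p : cB C * cB D) : option (cB C * cB D) :=
  if (ceps D i p.2 < cphi C i p.1)%N
  then omap (fun c => (c, p.2)) (cf C i p.1)
  else omap (fun d => (p.1, d)) (cf D i p.2).

Definition tensor_wt (n : nat) (C D : crystal_data n) (p : cB C * cB D) : weight n :=
  fun j => cwt C p.1 j + cwt D p.2 j.

Inductive in_F (n : nat) (T : Type) (f : 'I_n -> T -> option T) (b0 : T) : T -> Prop :=
  | inF0 : in_F f b0 b0
  | inFS i b b' : in_F f b0 b -> f i b = Some b' -> in_F f b0 b'.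

(** B_w(lambda) for the word w = [:: i1; ...; il]:
    { f_{i1}^{m1} ... f_{il}^{ml} b0 } \ {0} *)
Definition in_Bw (n : nat) (T : Type) (f : 'I_n -> T -> option T) (b0 : T)
    (w : seq 'I_n) (b : T) : Prop :=
  exists ms : seq nat, size ms = size w /\
    foldr (fun im o => obind (oiter (f im.1) im.2) o) (Some b0) (zip w ms) = Some b.

Arguments tensor_e {n} C D i p.
Arguments tensor_f {n} C D i p.
Arguments tensor_wt {n} C D p _.
Arguments in_F {n T} f b0 _.
Arguments in_Bw {n T} f b0 w b.
Arguments oiter {T} g k b.

Definition nat_wt (n : nat) (l : 'I_n -> nat) : weight n := fun i => (l i)%:Z.

(** Kashiwara's family {B(lambda)}_{lambda in P^+}, characterised (Joseph's
    uniqueness theorem) as a family of seminormal highest weight crystals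
    B(lambda) with highest weight element b_lambda of weight lambda, such that
    the subcrystal of B(lambda) (x) B(mu) generated by b_lambda (x) b_mu is
    isomorphic to B(lambda+mu). *)
Definition kashiwara_family (n : nat) (A : 'M[int]_n)
    (B : ('I_n -> nat) -> crystal_data n) (hw : forall l, cB (B l)) : Prop :=
  [/\ (forall l, seminormal A (B l)),
      (forall l j, cwt (B l) (hw l) j = nat_wt l j),
      (forall l i, ce (B l) i (hw l) = None),
      (forall l b, in_F (cf (B l)) (hw l) b) &
      (forall l m, exists g : cB (B l) * cB (B m) -> cB (B (fun i => l i + m i)%N),
        [/\ g (hw l, hw m) = hw _,
            (forall p q, in_F (tensor_f (B l) (B m)) (hw l, hw m) p ->
               in_F (tensor_f (B l) (B m)) (hw l, hw m) q -> g p = g q -> p = q),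
            (forall b, exists2 p, in_F (tensor_f (B l) (B m)) (hw l, hw m) p & g p = b) &
            (forall p, in_F (tensor_f (B l) (B m)) (hw l, hw m) p ->
               [/\ (forall j, cwt _ (g p) j = tensor_wt (B l) (B m) p j),
                   (forall i, omap g (tensor_f (B l) (B m) i p) = cf _ i (g p)) &
                   (forall i, omap g (tensor_e (B l) (B m) i p) = ce _ i (g p))])])].
Arguments kashiwara_family {n} A B hw.
Arguments seminormal {n} A C.
Arguments reduced {n} A w.

(* Main.v *)
Require Import Defs.
From mathcomp Require Import all_boot all_order all_algebra.
Set Implicit Arguments. Unset Strict Implicit. Unset Printing Implicit Defensive.
Import GRing.Theory.

Lemma oiterS (T : Type) (g : T -> option T) k b :
  oiter g k.+1 b = obind g (oiter g k b).
Proof. by []. Qed.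

Lemma oiterSr (T : Type) (g : T -> option T) k b :
  oiter g k.+1 b = obind (oiter g k) (g b).
Proof.
elim: k => [|k IH]; first by rewrite /oiter /=; case: (g b).
rewrite oiterS IH; case: (g b) => //= c.
Qed.

Lemma oiter_None_le (T : Type) (g : T -> option T) k k' b :
  oiter g k b = None -> (k <= k')%N -> oiter g k' b = None.
Proof.
move=> H /subnK <-; elim: (k' - k)%N => [//|d IH].
by rewrite addSn oiterS IH.
Qed.

Lemma max_succ (T : Type) (g : T -> option T) (N : T -> nat)
  (H : forall b, oiter g (N b) b <> None /\ oiter g (N b).+1 b = None) b b' :
  g b = Some b' -> N b = (N b').+1.
Proof.
move=> gb; have [h1 h2] := H b; have [h3 h4] := H b'.
case Nb: (N b) => [|k].
  by move: h2; rewrite Nb oiterSr gb.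
rewrite Nb oiterSr gb /= in h1.
rewrite Nb oiterSr gb in h2.
congr _.+1; case: (ltngtP (N b') k) => // [lt|gt].
- by exfalso; apply: h1; exact: (oiter_None_le h4 lt).
- by exfalso; apply: h3; exact: (oiter_None_le h2 gt).
Qed.

Section SN.
Variables (n : nat) (A : 'M[int]_n) (C : crystal_data n).
Hypothesis HC : seminormal A C.

Lemma sn_ef i b b' : ce C i b = Some b' <-> cf C i b' = Some b.
Proof. by case: HC. Qed.

Lemma sn_eps_succ i b b' : ce C i b = Some b' -> ceps C i b = (ceps C i b').+1.
Proof. by case: HC => _ _ He _ _; apply: (max_succ (He i)). Qed.

Lemma sn_phi_succ i b b' : cf C i b = Some b' -> cphi C i b = (cphi C i b').+1.
Proof. by case: HC => _ _ _ Hp _; apply: (max_succ (Hp i)). Qed.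

Lemma sn_eps_pos i b : (0 < ceps C i b)%N -> exists b', ce C i b = Some b'.
Proof.
case: HC => _ _ He _ _; have [h1 _] := He i b.
case Eb: (ceps C i b) => [|k] // _.
rewrite Eb oiterSr in h1.
case E: (ce C i b) h1 => [b'|] //= _; by exists b'.
Qed.

Lemma sn_eps_hw i b : ce C i b = None -> ceps C i b = 0%N.
Proof.
case: HC => _ _ He _ _ E; have [h1 _] := He i b.
case Eb: (ceps C i b) h1 => [|k] //.
by rewrite oiterSr E.
Qed.

Lemma sn_phi0 i b : cphi C i b = 0%N -> cf C i b = None.
Proof.
case: HC => _ _ _ Hp _ E; have [_ h2] := Hp i b.
by move: h2; rewrite E.
Qed.
End SN.

Lemma tensor_fe n (A : 'M[int]_n) (C D : crystal_data n)
  (HC : seminormal A C) (HD : seminormal A D) i q p :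
  tensor_f C D i q = Some p -> tensor_e C D i p = Some q.
Proof.
case: q => x y; rewrite /tensor_f /tensor_e /=.
case: ltnP => Hlt.
- case Ef: (cf C i x) => [x1|] //= [<-] /=.
  have Hphi := sn_phi_succ HC Ef.
  have -> : (ceps D i y <= cphi C i x1)%N by rewrite -ltnS -Hphi.
  by have -> : ce C i x1 = Some x by apply/(sn_ef HC).
- case Ef: (cf D i y) => [y1|] //= [<-] /=.
  have He : ce D i y1 = Some y by apply/(sn_ef HD).
  by rewrite (sn_eps_succ HD He) -/(leq _ _) ltnNge Hlt /= He.
Qed.

Section Main.
Variables (n : nat) (A : 'M[int]_n)
    (B : ('I_n -> nat) -> crystal_data n) (hw : forall l, cB (B l)).
Hypothesis HK : kashiwara_family A B hw.
Variables l m : 'I_n -> nat.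
Hypothesis Hsupp : forall i, l i = 0%N -> m i = 0%N.

Let Cin p := in_F (tensor_f (B l) (B m)) (hw l, hw m) p.

Lemma closed_e i p q : Cin p -> tensor_e (B l) (B m) i p = Some q -> Cin q.
Proof.
case: HK => Hsn _ _ _ Htens; have [g [_ ginj gsurj gmor]] := Htens l m.
move=> Cp Ep; have [_ _ Hee] := gmor p Cp.
have := Hee i; rewrite Ep /= => Eg.
have Hf : cf _ i (g q) = Some (g p) by apply/(sn_ef (Hsn _)); rewrite -Eg.
have [q' Cq' gq'] := gsurj (g q).
have [_ Hff _] := gmor q' Cq'.
have := Hff i; rewrite gq' Hf.
case Eq': (tensor_f (B l) (B m) i q') => [p'|] //= [gp'].
have Cp' : Cin p' by apply: inFS Cq' Eq'.
have pp : p' = p by apply: ginj.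
subst p'; have := tensor_fe (Hsn l) (Hsn m) Eq'.
by rewrite Ep => -[->].
Qed.

Lemma hw_phi k j : cphi (B k) j (hw k) = k j.
Proof.
case: HK => Hsn Hwt Hhe _ _.
have E0 := sn_eps_hw (Hsn k) (Hhe k j).
case: (Hsn k) => _ _ _ _ Hw.
have := Hw j (hw k); rewrite E0 subr0 Hwt /nat_wt.
by case.
Qed.

Lemma base p : Cin p -> p.1 = hw l -> p.2 = hw m.
Proof.
case: HK => Hsn Hwt Hhe _ _.
elim => [//|j q p' Cq IH Ef].
case: q Ef IH Cq => x0 y0; rewrite /tensor_f /=.
case: ltnP => H.
- case E: (cf _ j x0) => [x1|] //= [<-] /= _ _ Ex1.
  have := (sn_ef (Hsn l) _ _ _).2 E.
  by rewrite Ex1 Hhe.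
- case E: (cf _ j y0) => [y1|] //= [<-] /= IH _ Ex0.
  have Hy0 := IH Ex0; subst x0 y0.
  rewrite (sn_eps_hw (Hsn m) (Hhe m j)) leqn0 hw_phi in H.
  have := Hsupp (eqP H); rewrite -(hw_phi m j) => /(sn_phi0 (Hsn m)).
  by rewrite E.
Qed.

Lemma step i : forall k x' p, Cin p -> oiter (cf (B l) i) k x' = Some p.1 ->
  exists y1 b, Cin (x', y1) /\ oiter (cf (B m) i) b y1 = Some p.2.
Proof.
case: HK => Hsn _ _ _ _.
elim => [|k IHk] x' [x y].
  by move=> Cp [->]; exists y, 0%N.
move=> Cp; rewrite oiterS /=.
case Ek: (oiter _ k x') => [x''|] //= Ef.
have He : ce (B l) i x = Some x'' by apply/(sn_ef (Hsn l)).
have case1 : forall y0, Cin (x, y0) -> (ceps (B m) i y0 <= cphi (B l) i x)%N ->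
    exists y1 b, Cin (x', y1) /\ oiter (cf (B m) i) b y1 = Some y0.
  move=> y0 Cy Hc.
  have Cx : Cin (x'', y0).
    by apply: (closed_e (i := i) Cy); rewrite /tensor_e /= Hc He.
  exact: (IHk x' (x'', y0) Cx Ek).
have main : forall N y0, (ceps (B m) i y0 <= N)%N -> Cin (x, y0) ->
    exists y1 b, Cin (x', y1) /\ oiter (cf (B m) i) b y1 = Some y0.
  elim => [|N IHN] y0 Hy Cy; (case: (leqP (ceps (B m) i y0) (cphi (B l) i x)) => Hc;
    first exact: case1).
  - by move: (leq_trans Hc Hy).
  - have [y1' Ey] := sn_eps_pos (Hsn m) (leq_ltn_trans (leq0n _) Hc).
    have Hs := sn_eps_succ (Hsn m) Ey.
    have Cy' : Cin (x, y1').
      apply: (closed_e (i := i) Cy).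
      by rewrite /tensor_e /= leqNgt Hc /= Ey.
    have HyN : (ceps (B m) i y1' <= N)%N by rewrite -ltnS -Hs.
    have [y1 [b [Cy1 Hb]]] := IHN y1' HyN Cy'.
    exists y1, b.+1; split => //.
    by rewrite oiterS Hb /=; apply/(sn_ef (Hsn m)).
exact: (main _ y (leqnn _) Cp).
Qed.

Lemma mainw w : forall x y, Cin (x, y) -> in_Bw (cf (B l)) (hw l) w x ->
  in_Bw (cf (B m)) (hw m) w y.
Proof.
elim: w => [|i w IH] x y Cxy [ms [Hs Hf]].
  exists [::]; split => //=.
  case: ms Hs Hf => [|? ?] //= _ [Ex]; have := base Cxy; rewrite /= -Ex => ->; done.
case: ms Hs Hf => [|k ms] //= [Hs].
case Ef: (foldr _ _ (zip w ms)) => [x'|] //= Hk.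
have [y1 [b [Cy1 Hb]]] := step Cxy Hk.
have [ms1 [Hs1 Hf1]] := IH x' y1 Cy1 (ex_intro _ ms (conj Hs Ef)).
exists (b :: ms1); split; first by rewrite /= Hs1.
by rewrite /= Hf1 /=.
Qed.
End Main.

Theorem lemma9p1 (n : nat) (A : 'M[int]_n)
    (B : ('I_n -> nat) -> crystal_data n) (hw : forall l, cB (B l)) :
  cartan_finite A -> kashiwara_family A B hw ->
  forall l m : 'I_n -> nat,
    (forall i, l i = 0%N -> m i = 0%N) ->
  forall (x : cB (B l)) (y : cB (B m)),
    in_F (tensor_f (B l) (B m)) (hw l, hw m) (x, y) ->
  forall w : seq 'I_n, reduced A w ->
    in_Bw (cf (B l)) (hw l) w x -> in_Bw (cf (B m)) (hw m) w y.
Proof.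
move=> _ HK l m Hsupp x y Cxy w _.
exact: (mainw HK Hsupp Cxy).
Qed.
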